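(* Let $\Phi=[\mathbf a_1,\dots,\mathbf a_k]\in\mathbb R^{m\times k}$ have full column rank, let $\mathbf z\in\mathbb R^k$, and let $\mathbf w^\perp\in\mathbb R^m$ be nonzero and orthogonal to the range of $\Phi$; set $\mathbf y=\Phi\mathbf z+\mathbf w^\perp$. Let $I\subsetneq\{1,\dots,k\}$ be a proper subset and $\mathbf P$ the orthogonal projection onto the orthogonal complement of $\mathrm{span}\{\mathbf a_i: i\in I\}$ (the identity if $I=\emptyset$). Then $$\max_{j\in\{1,\dots,k\}}\frac{|\mathbf a_j^T\mathbf P\mathbf y|^2}{\|\mathbf P\mathbf y\|^2}\ \ge\ \frac{\sigma_{\min}^4(\Phi)\,z_{\min}^2}{\sigma_{\max}^2(\Phi)\,k\,z_{\min}^2+\|\mathbf w^\perp\|^2},$$ where $z_{\min}=\min_{j}|z_j|$ and $\sigma_{\min}(\Phi),\sigma_{\max}(\Phi)$ are the smallest and largest singular values of $\Phi$.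
   Context: All vectors and matrices are real; $\mathbf a^T$ denotes transpose. *)

(* Defs.v *)
From HB Require Import structures.
From mathcomp Require Import all_boot all_order all_algebra.
Set Implicit Arguments. Unset Strict Implicit. Unset Printing Implicit Defensive.
Import Order.TTheory GRing.Theory Num.Theory.
Local Open Scope ring_scope.

Section Defs.
Variable R : rcfType.

Definition sqnorm {m : nat} (v : 'cV[R]_m) : R := (v^T *m v) 0 0.

Definition dotv {m : nat} (a v : 'cV[R]_m) : R := (a^T *m v) 0 0.

Definition orth_proj {m : nat} (P : 'M[R]_m) (S : 'cV[R]_m -> Prop) : Prop :=
  [/\ P^T = P, P *m P = P & forall v, P *m v = v <-> S v].

(* s is the smallest singular value of Phi : s >= 0 and s^2 is the smallest
   eigenvalue of Phi^T Phi. *)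
Definition is_sigma_min {m k : nat} (Phi : 'M[R]_(m, k)) (s : R) : Prop :=
  [/\ 0 <= s, eigenvalue (Phi^T *m Phi) (s ^+ 2)
    & forall e, eigenvalue (Phi^T *m Phi) e -> s ^+ 2 <= e].

Definition is_sigma_max {m k : nat} (Phi : 'M[R]_(m, k)) (s : R) : Prop :=
  [/\ 0 <= s, eigenvalue (Phi^T *m Phi) (s ^+ 2)
    & forall e, eigenvalue (Phi^T *m Phi) e -> e <= s ^+ 2].

(* z_min = min_j |z_j| (the minimum of the nonempty list; 0 if k = 0) *)
Definition zmin {k : nat} (z : 'cV[R]_k) : R :=
  let s := [seq `|z i 0| | i <- enum 'I_k] in foldr Num.min (head 0 s) s.

End Defs.

(* Main.v *)
Require Import Defs.
From HB Require Import structures.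
From mathcomp Require Import all_boot all_order all_algebra.
From mathcomp Require Import complex.
From mathcomp Require Import lra.
Import Order.TTheory GRing.Theory Num.Theory.
Set Implicit Arguments. Unset Strict Implicit. Unset Printing Implicit Defensive.
Local Open Scope ring_scope.

Section Spec.
Local Open Scope sesquilinear_scope.
Variable R : rcfType.
Local Notation f := (real_complex R).
Lemma conj_f (r : R) : (f r)^* = f r.
Proof. by apply/CrealP/complex_realP; exists r. Qed.

Lemma sym_decomp k (G : 'M[R]_k) : G^T = G ->
  exists r : 'I_k -> R, (forall i, eigenvalue G (r i)) /\
  forall x : 'cV[R]_k, exists c : 'I_k -> R, (forall i, 0 <= c i) /\
     (x^T *m x) 0 0 = \sum_i c i /\ (x^T *m G *m x) 0 0 = \sum_i r i * c i.
Proof.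
move=> Gsym.
set A := map_mx f G.
have Aherm : A \is hermsymmx.
  apply/is_hermitianmxP; rewrite expr0 scale1r /A map_trmx Gsym.
  by apply/matrixP => i j; rewrite !mxE conj_f.
have /orthomx_spectralP AE := hermitian_normalmx Aherm.
have dreal := hermitian_spectral_diag_real Aherm.
set U := spectralmx A in AE; set d := spectral_diag A in AE dreal.
have Uu : U \is unitarymx by apply: spectral_unitarymx.
have Uunit : U \in unitmx by apply: spectral_unit.
have Ui : invmx U = U ^t* by apply: invmx_unitary.
have dR i : (complex.Re (d 0 i))%:C%C = d 0 i.
  by apply: RRe_real; apply: (mxOverP dreal).
exists (fun i => complex.Re (d 0 i)); split.
  move=> i; suff : eigenvalue A (d 0 i).
    by rewrite !eigenvalue_root_char -dR /A -map_char_poly fmorph_root.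
  apply/eigenvalueP.
  exists (delta_mx 0 i *m U).
    rewrite [X in _ *m X]AE !mulmxA mulmxK // scalemxAl; congr (_ *m _).
    apply/matrixP => a b; rewrite !mxE (bigD1 b) //= big1 ?addr0.
      by rewrite !mxE !ord1 !eqxx /= mulr1n; have [->|] := eqVneq b i; rewrite ?mulr1 ?mul1r ?mulr0 ?mul0r.
    by move=> c /negbTE cb; rewrite !mxE cb mulr0n mulr0.
  apply/eqP => /(congr1 (mulmx^~ (invmx U))); rewrite mulmxK // mul0mx.
  by move/matrixP => /(_ 0 i); rewrite !mxE !eqxx /= => /eqP; rewrite oner_eq0.
move=> x.
have xcT : (map_mx f x)^t* = (map_mx f x)^T.
  by apply/matrixP => a b; rewrite !mxE conj_f.
have UU : U^t* *m U = 1%:M by rewrite -Ui mulVmx.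
set w := U *m map_mx f x.
have cR i : (complex.Re (w i 0 * (w i 0)^*))%:C%C = w i 0 * (w i 0)^*.
  by apply: RRe_real; apply: ger0_real; apply: mul_conjC_ge0.
exists (fun i => complex.Re (w i 0 * (w i 0)^*)); split; [|split].
- move=> i; have h := mul_conjC_ge0 (w i 0); rewrite -cR in h; by rewrite -(@lecR R).
- apply: (@complexI R _ _); rewrite rmorph_sum /=.
  under eq_bigr => i _ do rewrite cR.
  rewrite (_ : ((x^T *m x) 0 0)%:C%C = (map_mx f (x^T *m x)) 0 0); last by rewrite [RHS]mxE.
  rewrite map_mxM -map_trmx -xcT.
  have -> : (map_mx f x)^t* *m map_mx f x = w^t* *m w.
    by rewrite /w trmx_mul map_mxM mulmxA -(mulmxA _ _ U) UU mulmx1.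
  by rewrite mxE; apply: eq_bigr => i _; rewrite !mxE mulrC.
- apply: (@complexI R _ _); rewrite rmorph_sum /=.
  under eq_bigr => i _ do rewrite rmorphM /= dR cR.
  rewrite (_ : ((x^T *m G *m x) 0 0)%:C%C = (map_mx f (x^T *m G *m x)) 0 0); last by rewrite [RHS]mxE.
  rewrite !map_mxM -map_trmx -xcT -/A AE Ui.
  have -> : (map_mx f x)^t* *m (U^t* *m diag_mx d *m U) *m map_mx f x = w^t* *m (diag_mx d *m w).
    by rewrite /w trmx_mul map_mxM !mulmxA.
  rewrite mul_diag_mx mxE; apply: eq_bigr => i _; rewrite !mxE.
  by rewrite mulrCA [_^* * _]mulrC.
Qed.
End Spec.

Section IP.
Variable R : rcfType.
Definition ip {m} (a b : 'cV[R]_m) := (a^T *m b) 0 0.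

Lemma ipE m (a b : 'cV[R]_m) : ip a b = \sum_i a i 0 * b i 0.
Proof. by rewrite /ip mxE; apply: eq_bigr => i _; rewrite mxE. Qed.

Lemma ipC m (a b : 'cV[R]_m) : ip a b = ip b a.
Proof. by rewrite !ipE; apply: eq_bigr => i _; rewrite mulrC. Qed.

Lemma ipDr m (a b c : 'cV[R]_m) : ip a (b + c) = ip a b + ip a c.
Proof. by rewrite !ipE -big_split; apply: eq_bigr => i _; rewrite mxE mulrDr. Qed.

Lemma ipBr m (a b c : 'cV[R]_m) : ip a (b - c) = ip a b - ip a c.
Proof. by rewrite !ipE -sumrB; apply: eq_bigr => i _; rewrite !mxE mulrBr. Qed.

Lemma ipDl m (a b c : 'cV[R]_m) : ip (b + c) a = ip b a + ip c a.
Proof. by rewrite ipC ipDr ![ip a _]ipC. Qed.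

Lemma ipBl m (a b c : 'cV[R]_m) : ip (b - c) a = ip b a - ip c a.
Proof. by rewrite ipC ipBr ![ip a _]ipC. Qed.

Lemma ipZl m (s : R) (a b : 'cV[R]_m) : ip (s *: a) b = s * ip a b.
Proof. by rewrite !ipE mulr_sumr; apply: eq_bigr => i _; rewrite mxE mulrA. Qed.

Lemma ipZr m (s : R) (a b : 'cV[R]_m) : ip a (s *: b) = s * ip a b.
Proof. by rewrite ipC ipZl ipC. Qed.

Lemma ip0r m (a : 'cV[R]_m) : ip a 0 = 0.
Proof. by rewrite ipE big1 // => i _; rewrite mxE mulr0. Qed.

Lemma ipM m n (a : 'cV[R]_m) (M : 'M[R]_(m, n)) (b : 'cV[R]_n) :
  ip a (M *m b) = ip (M^T *m a) b.
Proof. by rewrite /ip trmx_mul trmxK mulmxA. Qed.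

Lemma ip_ge0 m (a : 'cV[R]_m) : 0 <= ip a a.
Proof. by rewrite ipE; apply: sumr_ge0 => i _; rewrite -expr2 sqr_ge0. Qed.

Lemma ip_eq0 m (a : 'cV[R]_m) : ip a a = 0 -> a = 0.
Proof.
rewrite ipE => /psumr_eq0P h; apply/matrixP => i j; rewrite ord1 mxE.
have /eqP := h (fun i _ => ltac:(by rewrite -expr2 sqr_ge0)) i isT.
by rewrite mulf_eq0 orbb => /eqP.
Qed.

End IP.

Section Zmin.
Variable R : rcfType.

Lemma foldr_min_le (s : seq R) h x : x \in s -> foldr Num.min h s <= x.
Proof.
elim: s => //= a s IH; rewrite inE => /orP[/eqP->|xs].
  by rewrite ge_min lexx.
by rewrite ge_min IH ?orbT.
Qed.

Lemma foldr_min_ge0 (s : seq R) h : 0 <= h -> (forall x, x \in s -> 0 <= x) ->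
  0 <= foldr Num.min h s.
Proof.
move=> h0; elim: s => //= a s IH hs; rewrite le_min hs ?mem_head //=.
by apply: IH => x xs; apply: hs; rewrite inE xs orbT.
Qed.

Lemma zmin_le k (z : 'cV[R]_k) j : zmin z <= `|z j 0|.
Proof. by apply: foldr_min_le; apply: map_f; rewrite mem_enum. Qed.

Lemma zmin_ge0 k (z : 'cV[R]_k) : 0 <= zmin z.
Proof.
rewrite /zmin; apply: foldr_min_ge0.
  by case: (enum 'I_k) => //= a _.
by move=> x /mapP [i _ ->].
Qed.
End Zmin.

Theorem mainTheorem7 (R : rcfType) (m k : nat) (Phi : 'M[R]_(m, k))
  (z : 'cV[R]_k) (w : 'cV[R]_m) (I : {set 'I_k}) (P : 'M[R]_m)
  (smin smax : R) :
  \rank Phi = k ->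
  w != 0 ->
  (forall j : 'I_k, dotv (col j Phi) w = 0) ->
  I \proper setT ->
  orth_proj P (fun v => forall i, i \in I -> dotv (col i Phi) v = 0) ->
  is_sigma_min Phi smin ->
  is_sigma_max Phi smax ->
  let y := Phi *m z + w in
  \big[Num.max/0]_(j < k)
     ((dotv (col j Phi) (P *m y)) ^+ 2 / sqnorm (P *m y))
  >= smin ^+ 4 * zmin z ^+ 2
     / (smax ^+ 2 * k%:R * zmin z ^+ 2 + sqnorm w).
Proof.
move=> rk wn0 hw Iprop [PT PP PS] [smin0 _ sminE] [smax0 _ smaxE]; cbv zeta; set y := Phi *m z + w.
have dE m' (a b : 'cV[R]_m') : dotv a b = ip a b by [].
have Gs : (Phi^T *m Phi)^T = Phi^T *m Phi by rewrite trmx_mul trmxK.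
have [r [reig rdec]] := sym_decomp Gs.
have quadE x : ip (Phi *m x) (Phi *m x) = (x^T *m (Phi^T *m Phi) *m x) 0 0.
  by rewrite /ip trmx_mul !mulmxA.
have lowb x : smin ^+ 2 * ip x x <= ip (Phi *m x) (Phi *m x).
  have [c [c0 [e1 e2]]] := rdec x.
  rewrite quadE e2 /ip e1 mulr_sumr; apply: ler_sum => i _.
  by apply: ler_wpM2r => //; exact: sminE.
have uppb x : ip (Phi *m x) (Phi *m x) <= smax ^+ 2 * ip x x.
  have [c [c0 [e1 e2]]] := rdec x.
  rewrite quadE e2 /ip e1 mulr_sumr; apply: ler_sum => i _.
  by apply: ler_wpM2r => //; exact: smaxE.
have PvS v : forall i, i \in I -> ip (col i Phi) (P *m v) = 0.
  by apply/(PS (P *m v)); rewrite mulmxA PP.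
have Pa i : i \in I -> P *m col i Phi = 0.
  move=> iI; apply: ip_eq0.
  by have := PvS (P *m col i Phi) i iI; rewrite ipM PT.
have Pw : P *m w = w by apply/PS => i _; exact: hw.
set D : 'M[R]_k := diag_mx (\row_i ((i \in I)%:R : R)).
set E : 'M[R]_k := 1%:M - D.
have DT : D^T = D := tr_diag_mx _.
have ET : E^T = E by rewrite /E linearB /= trmx1 DT.
have DD : D *m D = D.
  rewrite /D mul_diag_mx; apply/matrixP => a b; rewrite !mxE.
  by case: (a \in I); rewrite ?mul1r ?mul0r ?mul0rn.
have ED : E *m D = 0 by rewrite /E mulmxBl mul1mx DD subrr.
have DE : D *m E = 0 by rewrite /E mulmxBr mulmx1 DD subrr.
have EE : E *m E = E by rewrite {1}/E mulmxBl mul1mx DE subr0.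
have PPhi0 b : b \in I -> col b (P *m Phi) = 0.
  by move=> bI; rewrite !colE -mulmxA -colE Pa.
have PPD : P *m Phi *m D = 0.
  rewrite /D mul_mx_diag; apply/matrixP => a b.
  case: (boolP (b \in I)) => bI.
    move/matrixP: (PPhi0 b bI) => /(_ a 0).
    rewrite [LHS]mxE => h; rewrite [LHS]mxE h !mxE mul0r //.
  by rewrite [LHS]mxE [X in _ * X]mxE (negbTE bI) mulr0 mxE.
set z' := E *m z.
set q := Phi *m z'.
set v := P *m q.
have Py : P *m y = v + w.
  rewrite /y mulmxDr Pw /v /q /z'; congr (_ + _).
  rewrite {1}(_ : z = E *m z + D *m z); last by rewrite /E mulmxBl mul1mx subrK.
  by rewrite !mulmxDr !mulmxA PPD mul0mx addr0.
have PhiTw : Phi^T *m w = 0.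
  apply/matrixP => j a; rewrite ord1; have := hw j.
  by rewrite dE /ip tr_col -row_mul mxE => ->; rewrite mxE.
have wq : ip w q = 0 by rewrite /q ipM PhiTw ipC ip0r.
have Pself a b : ip (P *m a) b = ip a (P *m b) by rewrite [RHS]ipM PT.
have wv : ip w v = 0 by rewrite /v -Pself Pw wq.
have Sy : ip (P *m y) (P *m y) = ip v v + ip w w.
  by rewrite Py ipDl !ipDr [ip v w]ipC wv add0r addr0.
have PPa a : P *m (P *m a) = P *m a by rewrite mulmxA PP.
have vv : ip v v = ip q v by rewrite {1}/v Pself PPa.
have vup : ip v v <= ip q q.
  have -> : ip q q = ip v v + ip (q - v) (q - v).
    rewrite ipBl !ipBr [ip v q]ipC -vv.
    by rewrite subrr subr0 addrC subrK.
  by rewrite lerDl ip_ge0.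
have [y0 hy0] : exists y0 : 'cV[R]_k, q - v = Phi *m (D *m y0).
  set B := (Phi *m D)^T.
  set C := cokermx B.
  have BC : B *m C = 0 := mulmx_coker B.
  have hc j : P *m col j C = col j C.
    apply/PS => i iI; rewrite dE /ip tr_col -row_mul mxE.
    have : B *m col j C = 0 by rewrite colE mulmxA BC mul0mx.
    rewrite /B trmx_mul DT -mulmxA mul_diag_mx.
    move/matrixP => /(_ i 0); rewrite [LHS]mxE [X in X * _]mxE iI mul1r => ->.
    by rewrite mxE.
  have PC : P *m C = C.
    apply/matrixP => a b.
    have e : col b (P *m C) = col b C by rewrite colE -mulmxA -colE hc.
    by move/matrixP: e => /(_ a 0); rewrite [LHS]mxE [RHS]mxE.
  have u0C : (q - v)^T *m C = 0.
    by rewrite linearB /= /v [(P *m q)^T]trmx_mul PT mulmxBl -mulmxA PC subrr.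
  have : ((q - v)^T <= B)%MS by rewrite submxE u0C.
  case/submxP => y1 hy1; exists y1^T.
  by rewrite -[q - v]trmxK hy1 trmx_mul /B trmxK mulmxA.
have s0 : 0 <= smin ^+ 2 := sqr_ge0 smin.
have vlow : smin ^+ 2 * ip z' z' <= ip v v.
  have vE : v = Phi *m (z' - D *m y0).
    by rewrite mulmxBr -hy0 /q opprB addrC subrK.
  have cr : ip z' (D *m y0) = 0.
    by rewrite /z' ipC ipM ET mulmxA ED mul0mx ipC ip0r.
  have h1 : ip z' z' <= ip (z' - D *m y0) (z' - D *m y0).
    rewrite ipBl !ipBr [ip (D *m y0) z']ipC cr subr0 sub0r opprK.
    by rewrite lerDl ip_ge0.
  rewrite vE; apply: le_trans (lowb _); exact: ler_wpM2l.
set g := Phi^T *m v.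
have vg : ip v v = ip z' (E *m g).
  transitivity (ip z' g); first by rewrite vv /q ipC ipM ipC.
  by rewrite ipM ET /z' mulmxA EE.
have dj j : dotv (col j Phi) (P *m y) = g j 0.
  by rewrite dE Py ipDr [ip _ w](hw j) addr0 /ip tr_col -row_mul mxE.
have Nlow : smin ^+ 4 * ip z' z' <= ip (E *m g) (E *m g).
  have h := ip_ge0 (smin ^+ 2 *: z' - E *m g).
  rewrite ipBl !ipBr !ipZl !ipZr [ip (E *m g) z']ipC -vg in h.
  have h2 : smin ^+ 2 * (smin ^+ 2 * ip z' z') <= smin ^+ 2 * ip v v.
    exact: ler_wpM2l.
  rewrite (_ : smin ^+ 4 = smin ^+ 2 * smin ^+ 2); last by rewrite -exprD.
  move: h h2; set a := smin ^+ 2; set T := ip z' z'; set V := ip v v.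
  set N := ip _ _ => h h2. 
  nra.
have Ex x i : (E *m x) i 0 = if i \in I then 0 else x i 0.
  rewrite /E mulmxBl mul1mx /D mul_diag_mx !mxE.
  by case: (i \in I); rewrite ?mul1r ?mul0r ?subrr ?subr0.
have sumE x : ip (E *m x) (E *m x) = \sum_(i in ~: I) x i 0 ^+ 2.
  rewrite ipE (bigID (fun i => i \in I)) /= big1 ?add0r; last first.
    by move=> i iI; rewrite Ex iI mul0r.
  apply: eq_big => i; first by rewrite in_setC.
  by move=> iI; rewrite Ex (negbTE iI) expr2.
set n := #|~: I|.
have n1 : (1 <= n)%N.
  case/properP: Iprop => _ [j _ jI]; apply/card_gt0P; exists j; by rewrite in_setC.
have nk : (n <= k)%N by rewrite -[k in (_ <= k)%N]card_ord max_card.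
have TnZ : n%:R * zmin z ^+ 2 <= ip z' z'.
  rewrite /z' sumE mulr_natl -sumr_const; apply: ler_sum => i _.
  rewrite -(real_normK (num_real (z i 0))) !expr2.
  by apply: ler_pM; rewrite ?zmin_ge0 ?zmin_le.
set S := sqnorm (P *m y).
have S0 : 0 < S.
  have -> : S = ip v v + ip w w by exact: Sy.
  apply: ltr_wpDl; first exact: ip_ge0.
  rewrite lt_def ip_ge0 andbT; apply/eqP => /ip_eq0 w0.
  by rewrite w0 eqxx in wn0.
set M := \big[Num.max/0]_(j < k) _.
have Mj j : g j 0 ^+ 2 <= M * S.
  rewrite -ler_pdivrMr // /M (bigD1 j) //= le_max -dj lexx //.
have NM : ip (E *m g) (E *m g) <= n%:R * M * S.
  rewrite sumE -mulrA mulr_natl -sumr_const; apply: ler_sum => i _; exact: Mj.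
have W0 : 0 < sqnorm w.
  rewrite lt_def ip_ge0 andbT; apply/eqP => /ip_eq0 w0.
  by rewrite w0 eqxx in wn0.
have SE : S = ip v v + ip w w by exact: Sy.
have Vup : ip v v <= smax ^+ 2 * ip z' z' := le_trans vup (uppb z').
have Z0 : 0 <= zmin z ^+ 2 := sqr_ge0 _.
have t0 : 0 <= smax ^+ 2 := sqr_ge0 _.
have s40 : 0 <= smin ^+ 4 by rewrite exprn_ge0.
have nR1 : 1 <= n%:R :> R by rewrite ler1n.
have nRk : n%:R <= k%:R :> R by rewrite ler_nat.
have T0 : 0 <= ip z' z' := ip_ge0 _.
move: (Nlow) (NM) (TnZ) SE Vup W0 S0.
rewrite /ge.
set T := ip z' z'; set V := ip v v; set W := ip w w; set N := ip (E *m g) (E *m g).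
set Z := zmin z ^+ 2; set a := smax ^+ 2; set b := smin ^+ 4.
set nn := (n%:R : R); set kk := (k%:R : R).
move=> h1 h2 h3 h4 h5 h6 h7.
have Den0 : 0 < a * kk * Z + W.
  apply: ltr_wpDl => //; apply: mulr_ge0 => //; apply: mulr_ge0 => //.
rewrite (_ : sqnorm w = W) // ler_pdivrMr //.
have p1 : nn * Z * V <= nn * Z * (a * T).
  apply: ler_wpM2l => //; apply: mulr_ge0 => //; lra.
have p2 : nn * (Z * a * T) <= kk * (Z * a * T).
  apply: ler_wpM2r => //; apply: mulr_ge0 => //; exact: mulr_ge0.
have p3 : nn * Z * W <= T * W.
  apply: ler_wpM2r => //; exact: ltW.
have q1 : Z * nn * S <= T * (a * kk * Z + W).
  rewrite h4; nra.
have q2 : b * (Z * nn * S) <= b * (T * (a * kk * Z + W)) := ler_wpM2l s40 q1.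
have q3 : b * T * (a * kk * Z + W) <= N * (a * kk * Z + W).
  by apply: ler_wpM2r => //; exact: ltW.
have q4 : N * (a * kk * Z + W) <= nn * M * S * (a * kk * Z + W).
  by apply: ler_wpM2r => //; exact: ltW.
have nS : 0 < nn * S by apply: mulr_gt0 => //; lra.
rewrite -(ler_pM2l nS).
nra.
Qed.
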